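(* Let $\mathbb{K}\subset\mathbb{K}'$ be an algebraically pure field extension where $\mathbb{K}$ is $\aleph_0$-complete. Let $x=(x_1,\ldots,x_n)$, $Y=(Y_1,\ldots,Y_m)$ and $f\in\mathbb{K}[\![x]\!][Y]^r$. Assume that there exists a solution $\hat y\in\mathbb{K}'[\![x]\!]^m$ of $f=0$ such that $\hat y_i\in\mathbb{K}'[\![x_{J_i}]\!]$ for some subsets $J_i\subset\{1,\ldots,n\}$, $i=1,\ldots,m$. Then there is a solution $y\in\mathbb{K}[\![x]\!]^m$ of $f=0$ such that $y_i\in\mathbb{K}[\![x_{J_i}]\!]$ and $\mathrm{ord}(y_i)=\mathrm{ord}(\hat y_i)$ for all $i=1,\ldots,m$.
   Context: A field extension $\mathbb{K}\subset\mathbb{K}'$ is algebraically pure if every finite system of polynomial equations with coefficients in $\mathbb{K}$ that has a solution in $\mathbb{K}'$ has a solution in $\mathbb{K}$. A field $\mathbb{K}$ is called $\aleph_0$-complete if every countable system $\mathcal S$ of polynomial equations with coefficients in $\mathbb{K}$ (in a countable number of indeterminates) has a solution in $\mathbb{K}$ if and only if every finite sub-system of $\mathcal S$ has a solution in $\mathbb{K}$. For a field $L$ and $J\subset\{1,\ldots,n\}$, $L[\![x_J]\!]$ denotes the ring of formal power series in the variables $x_j$, $j\in J$, viewed inside $L[\![x]\!]$. For a power series $g$, $\mathrm{ord}(g)$ is the smallest total degree of a monomial appearing in $g$ with nonzero coefficient ($\mathrm{ord}(0)=\infty$). *)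

(* Defs.v *)
From HB Require Import structures.
From mathcomp Require Import all_boot all_order all_algebra.
From mathcomp Require Import mpoly.
From Stdlib Require Import ClassicalEpsilon.

Set Implicit Arguments.
Unset Strict Implicit.
Unset Printing Implicit Defensive.

Import Order.TTheory GRing.Theory.
Local Open Scope ring_scope.

(* The extension K ⊂ K' is given by a (necessarily injective) field morphism
   phi. *)
Definition alg_pure (K K' : fieldType) (phi : {rmorphism K -> K'}) : Prop :=
  forall (N : nat) (S : seq {mpoly K[N]}),
    (exists v : 'I_N -> K', forall p, p \in S -> (map_mpoly phi p).@[v] = 0) ->
    exists v : 'I_N -> K, forall p, p \in S -> p.@[v] = 0.

(* A countable system in countably many indeterminates X_0, X_1, ...:
   the k-th equation is a polynomial in the first N_k indeterminates. *)
Definition csys (K : fieldType) := nat -> {N : nat & {mpoly K[N]}}.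

Definition csys_eval (K : fieldType) (S : csys K) (k : nat) (x : nat -> K) : K :=
  (projT2 (S k)).@[fun i : 'I_(projT1 (S k)) => x (nat_of_ord i)].

Definition aleph0_complete (K : fieldType) : Prop :=
  forall S : csys K,
    (exists x : nat -> K, forall k, csys_eval S k x = 0) <->
    (forall F : seq nat, exists x : nat -> K, forall k, k \in F -> csys_eval S k x = 0).

Definition ps (R : nzRingType) (n : nat) := 'X_{1..n} -> R.

Section PS.
Variables (R : nzRingType) (n : nat).

Definition ps_zero : ps R n := fun _ => 0.
Definition ps_one : ps R n := fun a => if a == 0%MM then 1 else 0.
Definition ps_add (f g : ps R n) : ps R n := fun a => f a + g a.

Definition ps_mul (f g : ps R n) : ps R n := fun a =>
  \sum_(b : 'X_{1..n < (mdeg a).+1} | (bmnm b <= a)%MM) f b * g (a - bmnm b)%MM.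

Definition ps_exp (f : ps R n) (k : nat) : ps R n := iter k (ps_mul f) ps_one.

Definition ps_in_vars (J : {set 'I_n}) (f : ps R n) : Prop :=
  forall a : 'X_{1..n}, f a != 0 -> forall i : 'I_n, a i != 0%N -> i \in J.

Definition ps_has_deg (f : ps R n) (k : nat) : bool :=
  [exists b : 'X_{1..n < k.+1}, (mdeg (bmnm b) == k) && (f b != 0)].

(* ord f : Some (least total degree of a monomial of f), None (= infinity)
   for f = 0. *)
Definition ps_ord (f : ps R n) : option nat :=
  match excluded_middle_informative (exists k, ps_has_deg f k) with
  | left H => Some (ex_minn H)
  | right _ => None
  end.

End PS.

Definition ps_map (K K' : nzRingType) (phi : K -> K') (n : nat) (f : ps K n)
  : ps K' n := fun a => phi (f a).

(* A polynomial P in K[[x]][Y_1..Y_m] of total degree < d, given by its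
   coefficients: P e is the coefficient of Y^e. *)
Definition pspoly (R : nzRingType) (n m d : nat) := 'X_{1..m < d} -> ps R n.

Definition ps_Ymon (R : nzRingType) (n m : nat) (y : 'I_m -> ps R n)
  (e : 'X_{1..m}) : ps R n :=
  foldr (fun i acc => ps_mul (ps_exp (y i) (e i)) acc) (@ps_one R n) (enum 'I_m).

Definition pspoly_eval (R : nzRingType) (n m d : nat) (P : pspoly R n m d)
  (y : 'I_m -> ps R n) : ps R n := fun a =>
  \sum_(e : 'X_{1..m < d}) ps_mul (P e) (ps_Ymon y (bmnm e)) a.

Definition pspoly_map (K K' : nzRingType) (phi : K -> K') (n m d : nat)
  (P : pspoly K n m d) : pspoly K' n m d := fun e => ps_map phi (P e).

(* Main.v *)
Require Import Defs.
From HB Require Import structures.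
From mathcomp Require Import all_boot all_order all_algebra.
From mathcomp Require Import mpoly.
From Stdlib Require Import FunctionalExtensionality ClassicalEpsilon.
Set Implicit Arguments.
Unset Strict Implicit.
Unset Printing Implicit Defensive.
Import Order.TTheory GRing.Theory.
Local Open Scope ring_scope.
Section Morph.
Variables (R S : nzRingType) (g : {rmorphism R -> S}) (n : nat).

Lemma ps_map_mul (f h : ps R n) :
  ps_map g (ps_mul f h) = ps_mul (ps_map g f) (ps_map g h).
Proof.
apply: functional_extensionality => a; rewrite /ps_map /ps_mul rmorph_sum.
by apply: eq_bigr => b _; rewrite rmorphM.
Qed.

Lemma ps_map_one : ps_map g (@ps_one R n) = @ps_one S n.
Proof.
apply: functional_extensionality => a; rewrite /ps_map /ps_one.
by case: (a == 0%MM); rewrite ?rmorph1 ?rmorph0.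
Qed.

Lemma ps_map_exp (f : ps R n) k : ps_map g (ps_exp f k) = ps_exp (ps_map g f) k.
Proof.
elim: k => [|k IH] /=; first exact: ps_map_one.
by rewrite ps_map_mul IH.
Qed.

Lemma ps_map_Ymon m (y : 'I_m -> ps R n) e :
  ps_map g (ps_Ymon y e) = ps_Ymon (fun i => ps_map g (y i)) e.
Proof.
rewrite /ps_Ymon; elim: (enum 'I_m) => [|i s IH] /=; first exact: ps_map_one.
by rewrite ps_map_mul IH ps_map_exp.
Qed.

Lemma pspoly_eval_map m d (P : pspoly R n m d) (y : 'I_m -> ps R n) :
  ps_map g (pspoly_eval P y) =
  pspoly_eval (pspoly_map g P) (fun i => ps_map g (y i)).
Proof.
apply: functional_extensionality => a; rewrite /ps_map /pspoly_eval rmorph_sum.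
apply: eq_bigr => e _.
by rewrite -ps_map_Ymon -ps_map_mul.
Qed.
End Morph.

Section Local.
Variables (R : nzRingType) (n : nat) (D : nat).
Definition agree (f f' : ps R n) := forall b : 'X_{1..n}, (mdeg b <= D)%N -> f b = f' b.

Lemma mdeg_le (a b : 'X_{1..n}) : (b <= a)%MM -> (mdeg b <= mdeg a)%N.
Proof. by move=> h; rewrite -(submK h) mdegD leq_addl. Qed.

Lemma agree_mul f f' h h' : agree f f' -> agree h h' -> agree (ps_mul f h) (ps_mul f' h').
Proof.
move=> A1 A2 a Ha; rewrite /ps_mul; apply: eq_bigr => b hb.
rewrite A1 ?A2 //; first exact: leq_trans (mdegB _ _) Ha.
exact: leq_trans (mdeg_le hb) Ha.
Qed.

Lemma agree_refl f : agree f f. Proof. by []. Qed.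

Lemma agree_exp f f' k : agree f f' -> agree (ps_exp f k) (ps_exp f' k).
Proof. move=> A; elim: k => [|k IH] //=; exact: agree_mul. Qed.

Lemma agree_Ymon m (y y' : 'I_m -> ps R n) e :
  (forall i, agree (y i) (y' i)) -> agree (ps_Ymon y e) (ps_Ymon y' e).
Proof.
move=> A; rewrite /ps_Ymon; elim: (enum 'I_m) => [|i s IH] //=.
by apply: agree_mul => //; apply: agree_exp.
Qed.

Lemma agree_eval m d (P : pspoly R n m d) (y y' : 'I_m -> ps R n) :
  (forall i, agree (y i) (y' i)) -> agree (pspoly_eval P y) (pspoly_eval P y').
Proof.
move=> A a Ha; rewrite /pspoly_eval; apply: eq_bigr => e _.
by apply: agree_mul => //; apply: agree_Ymon.
Qed.
End Local.
Section Main.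
Variables (K K' : fieldType) (phi : {rmorphism K -> K'})
  (n m r d : nat) (f : 'I_r -> pspoly K n m d) (yh : 'I_m -> ps K' n).

Definition V := (('I_m * 'X_{1..n}) + ('I_m * 'X_{1..n}))%type.
Definition E := (('I_r * 'X_{1..n}) + ('I_m * 'X_{1..n}))%type.
Definition cy (i : 'I_m) (b : 'X_{1..n}) : nat := pickle (inl (i, b) : V).
Definition cw (i : 'I_m) (b : 'X_{1..n}) : nat := pickle (inr (i, b) : V).
Definition yof (S : nzRingType) (xs : nat -> S) : 'I_m -> ps S n :=
  fun i b => xs (cy i b).

Definition need (e : E) : nat :=
  match e with
  | inl (j, a) => (\max_(ib : 'I_m * 'X_{1..n < (mdeg a).+1}) cy ib.1 (bmnm ib.2)).+1
  | inr (i, a) => (maxn (cy i a) (cw i a)).+1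
  end.

Definition mvar (N l : nat) : {mpoly K[N]} :=
  if (insub l : option 'I_N) is Some i then 'X_i else 0.

Definition Yg (N : nat) : 'I_m -> ps {mpoly K[N]} n := fun i b => mvar N (cy i b).

Definition Peq (N : nat) (e : E) : {mpoly K[N]} :=
  match e with
  | inl (j, a) => pspoly_eval (pspoly_map (fun c => c%:MP) (f j)) (Yg N) a
  | inr (i, a) => if yh i a == 0 then mvar N (cy i a)
                  else mvar N (cy i a) * mvar N (cw i a) - 1
  end.

Definition value (S : nzRingType) (h : K -> S) (xs : nat -> S) (e : E) : S :=
  match e with
  | inl (j, a) => pspoly_eval (pspoly_map h (f j)) (yof xs) a
  | inr (i, a) => if yh i a == 0 then xs (cy i a)
                  else xs (cy i a) * xs (cw i a) - 1
  end.

Lemma Peq_eval (S : nzRingType) N (g : {rmorphism {mpoly K[N]} -> S}) xs e :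
  (need e <= N)%N -> (forall l, (l < N)%N -> g (mvar N l) = xs l) ->
  g (Peq N e) = value (fun c => g c%:MP) xs e.
Proof.
case: e => [[j a]|[i a]] /= hN hg.
  have := congr1 (fun F => F a) (pspoly_eval_map g (pspoly_map (fun c => c%:MP) (f j)) (Yg N)).
  rewrite /ps_map /= => ->.
  apply: (agree_eval (D := mdeg a)) => // i b hb.
  rewrite /Yg /yof hg //; apply: leq_trans hN; rewrite ltnS.
  have hb' : (mdeg b < (mdeg a).+1)%N by [].
  exact: (leq_bigmax (F := fun ib : 'I_m * 'X_{1..n < (mdeg a).+1} => cy ib.1 (bmnm ib.2)) (i, BMultinom hb')).
have h1 : (cy i a < N)%N by apply: leq_trans hN; rewrite ltnS leq_maxl.
have h2 : (cw i a < N)%N by apply: leq_trans hN; rewrite ltnS leq_maxr.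
case: eqP => _; first by rewrite hg.
by rewrite rmorphB rmorphM rmorph1 !hg.
Qed.
End Main.
Lemma ps_ord_transfer (R R' : nzRingType) n (p : ps R n) (q : ps R' n) :
  (forall a, (p a != 0) = (q a != 0)) -> ps_ord p = ps_ord q.
Proof.
move=> H.
have Hd : forall k, ps_has_deg p k = ps_has_deg q k.
  by move=> k; rewrite /ps_has_deg; apply: eq_existsb => b; rewrite H.
rewrite /ps_ord.
case: excluded_middle_informative => [H1|H1]; case: excluded_middle_informative => [H2|H2].
- congr Some; case: ex_minnP => k1 hk1 m1; case: ex_minnP => k2 hk2 m2.
  apply/eqP; rewrite eqn_leq m1 ?Hd // m2 // -Hd //.
- by exfalso; apply: H2; case: H1 => k hk; exists k; rewrite -Hd.
- by exfalso; apply: H1; case: H2 => k hk; exists k; rewrite Hd.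
- by [].
Qed.

Definition extend (S : nzRingType) N (v : 'I_N -> S) (l : nat) : S :=
  if (insub l : option 'I_N) is Some i then v i else 0.

Theorem theorem3p5 (K K' : fieldType) (phi : {rmorphism K -> K'})
  (Hpure : alg_pure phi) (Hcomp : aleph0_complete K)
  (n m r d : nat) (f : 'I_r -> pspoly K n m d) (J : 'I_m -> {set 'I_n})
  (yh : 'I_m -> ps K' n) :
  (forall j : 'I_r, pspoly_eval (pspoly_map phi (f j)) yh = @ps_zero K' n) ->
  (forall i : 'I_m, ps_in_vars (J i) (yh i)) ->
  exists y : 'I_m -> ps K n,
    (forall j : 'I_r, pspoly_eval (f j) y = @ps_zero K n) /\
    (forall i : 'I_m, ps_in_vars (J i) (y i) /\ ps_ord (y i) = ps_ord (yh i)).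
Proof.
move=> Hsol Hvars.
pose xhat (l : nat) : K' :=
  match (unpickle l : option (V n m)) with
  | Some (inl (i, b)) => yh i b
  | Some (inr (i, b)) => (yh i b)^-1
  | None => 0 end.
have Hyof : yof xhat = yh.
  apply: functional_extensionality => i; apply: functional_extensionality => b.
  by rewrite /yof /xhat /cy pickleK.
have Hxhat : forall e, value f yh phi xhat e = 0.
  case=> [[j a]|[i a]] /=.
    by rewrite Hyof Hsol.
  case: eqP => [|/eqP h].
    by rewrite /xhat /cy pickleK.
  by rewrite /xhat /cy /cw !pickleK divff // subrr.
have EvK : forall N (v : 'I_N -> K) (xs : nat -> K) e, (need e <= N)%N ->
    (forall i : 'I_N, v i = xs i) ->
    (Peq f yh N e).@[v] = value f yh (fun c => c) xs e.
  move=> N v xs e hN hv.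
  have := @Peq_eval K K' n m r d f yh K N (meval v) xs e hN.
  rewrite /= => ->.
    by congr value; apply: functional_extensionality => c; rewrite mevalC.
  move=> l hl; rewrite /mvar; case: insubP => [i _ <-|/negP //].
  by rewrite mevalXU hv.
pose S : csys K := fun k =>
  match (unpickle k : option (E n m r)) with
  | Some e => existT (fun N => {mpoly K[N]}) (need e) (Peq f yh (need e) e)
  | None => existT (fun N => {mpoly K[N]}) 0%N (0 : {mpoly K[0]}) end.
have HS : forall k x, csys_eval S k x =
   match (unpickle k : option (E n m r)) with
   | Some e => value f yh (fun c => c) x e | None => 0 end.
  move=> k x; rewrite /csys_eval /S; case: unpickle => [e|] /=; last by rewrite meval0.
  by rewrite (EvK _ _ x).

have Hfin : forall F : seq nat, exists x, forall k, k \in F -> csys_eval S k x = 0.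
  move=> F.
  pose es := pmap (fun k => unpickle k : option (E n m r)) F.
  pose NF := (\max_(e <- es) need e)%N.
  have HN : forall e, e \in es -> (need e <= NF)%N.
    by move=> e he; by rewrite (leq_bigmax_seq _ he).
  have [v Hv] : exists v : 'I_NF -> K, forall p, p \in [seq Peq f yh NF e | e <- es] -> p.@[v] = 0.
    apply: Hpure.
    exists (fun i : 'I_NF => xhat i) => p /mapP [e he ->].
    have := @Peq_eval K K' n m r d f yh K' NF
      (meval (fun i : 'I_NF => xhat i) \o map_mpoly phi) xhat e (HN e he).
    rewrite /= => ->.
      rewrite -[RHS](Hxhat e); congr value.
      by apply: functional_extensionality => c; rewrite map_mpolyC mevalC.
    move=> l hl; rewrite /mvar; case: insubP => [i _ <-|/negP //].
    by rewrite (map_mpolyX phi (U_(i))%MM) mevalXU.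
  exists (extend v) => k hk.
  rewrite HS; case Ek: unpickle => [e|] //.
  have he : e \in es by rewrite mem_pmap; apply/mapP; exists k.
  rewrite -(EvK NF v) ?HN //; first by apply: Hv; apply: map_f.
  by move=> i; rewrite /extend valK.
have [x Hx] := (Hcomp S).2 Hfin.
have Hx' : forall e, value f yh (fun c => c) x e = 0.
  by move=> e; have := Hx (pickle e); rewrite HS pickleK.
exists (yof x); split.
  by move=> j; apply: functional_extensionality => a; exact: (Hx' (inl (j, a))).
move=> i.
have Hsupp : forall a, (yof x i a != 0) = (yh i a != 0).
  move=> a; have := Hx' (inr (i, a)); rewrite /=.
  case: eqP => [h0 hx|/eqP hn]; first by rewrite /yof hx eqxx.
  move/eqP; rewrite subr_eq0 /yof /= => /eqP h; apply/negP => /eqP h0.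
  by move: h; rewrite h0 mul0r => /eqP; rewrite eq_sym oner_eq0.
split; last exact: ps_ord_transfer.
by move=> a ha; apply: Hvars; rewrite -Hsupp.
Qed.
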